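(* For every integer $k\ge 2$, let $T(k,2)$ be the complete $k$-ary tree of height 2 (a root $x$ with children $x_1,\dots,x_k$, each $x_i$ having exactly $k$ children $x_{i1},\dots,x_{ik}$, which are leaves). Then $\tau(T(k,2))=k$ and $\beta_p(T(k,2))=k+1$.
   Context: Two vertices $u,v$ are twins if $N(u)\setminus\{v\}=N(v)\setminus\{u\}$; the twin number $\tau(G)$ is the maximum cardinality of an equivalence class of the twin relation. For a partition $\Pi=\{S_1,\dots,S_m\}$ of $V(G)$, $r(u|\Pi)=(d(u,S_1),\dots,d(u,S_m))$ with $d(u,S)=\min_{w\in S}d(u,w)$; $\Pi$ is locating if $r(u|\Pi)\ne r(v|\Pi)$ for all distinct $u,v$; $\beta_p(G)$ is the minimum size of a locating partition. *)

(* Defs.v *)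
From mathcomp Require Import all_boot.
Set Implicit Arguments. Unset Strict Implicit. Unset Printing Implicit Defensive.

Section Graphs.
Variable T : finType.
Variable e : rel T.

Definition nbhd (u : T) : {set T} := [set w | e u w].

Definition twins (u v : T) : bool := (nbhd u :\ v) == (nbhd v :\ u).

Definition twin_class (u : T) : {set T} := [set v | twins u v].

Definition twin_number : nat := \max_(u : T) #|twin_class u|.

Definition ball (u : T) (n : nat) : {set T} :=
  iter n (fun A => A :|: [set y | [exists x in A, e x y]]) [set u].

(* graph distance: least n with v in ball u n (all graphs considered are
   connected, so this is attained below #|T|) *)
Definition dist (u v : T) : nat :=
  find (fun n => v \in ball u n) (iota 0 #|T|).

Definition dist_set (u : T) (S : {set T}) : nat :=
  \big[minn/#|T|]_(w in S) dist u w.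

Definition locating (P : {set {set T}}) : bool :=
  partition P [set: T] &&
  [forall u, forall v, (u != v) ==>
     [exists S in P, dist_set u S != dist_set v S]].

Definition partition_dim : nat :=
  \big[minn/#|{set T}|]_(P : {set {set T}} | locating P) #|P|.

End Graphs.

(* Complete k-ary tree of height 2: vertices
   None = root x, Some (i, None) = x_i, Some (i, Some j) = x_ij. *)
Definition tk2_adj (k : nat) (a b : option ('I_k * option 'I_k)) : bool :=
  match a, b with
  | None, Some (_, None) => true
  | Some (_, None), None => true
  | Some (i, None), Some (j, Some _) => i == j
  | Some (i, Some _), Some (j, None) => i == j
  | _, _ => false
  end.

(* Main.v *)
Require Import Defs.
From mathcomp Require Import all_boot zify.
Set Implicit Arguments. Unset Strict Implicit. Unset Printing Implicit Defensive.

Section S.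
Variable k : nat.
Local Notation V := (option ('I_k * option 'I_k)).
Local Notation e := (@tk2_adj k).

Definition D (u v : V) : nat :=
 match u, v with
 | None, None => 0
 | None, Some (_, None) => 1
 | None, Some (_, Some _) => 2
 | Some (_, None), None => 1
 | Some (i, None), Some (i', None) => if i == i' then 0 else 2
 | Some (i, None), Some (i', Some _) => if i == i' then 1 else 3
 | Some (_, Some _), None => 2
 | Some (i, Some _), Some (i', None) => if i == i' then 1 else 3
 | Some (i, Some j), Some (i', Some j') => if i == i' then (if j == j' then 0 else 2) else 4
 end.

Definition pr (u v : V) : V :=
 match v with
 | None => match u with Some (i, _) => Some (i, None) | None => None end
 | Some (i, None) => match u with Some (i', Some _) => if i' == i then u else None | _ => None end
 | Some (i, Some _) => Some (i, None)
 end.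

Ltac crush := repeat (first [ solve [congruence] | case: (@eqP 'I_k) => //= ?; subst | case: eqP => //= ?; subst | done | move=> /= ]).

Lemma D0 u v : D u v = 0 -> u = v.
Proof.
case: u => [[i [j|]]|]; case: v => [[i' [j'|]]|] //=; crush.
Qed.

Lemma Duu u : D u u = 0.
Proof. by case: u => [[i [j|]]|] //=; rewrite ?eqxx. Qed.

Lemma D_le4 u v : D u v <= 4.
Proof. case: u => [[i [j|]]|]; case: v => [[i' [j'|]]|] //=; crush. Qed.

Lemma D_step u x v : e x v -> D u v <= (D u x).+1.
Proof.
case: u => [[i [j|]]|]; case: x => [[a [b|]]|]; case: v => [[i' [j'|]]|] //=; crush.
Qed.

Lemma D_pred u v n : D u v = n.+1 -> e (pr u v) v /\ D u (pr u v) = n.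
Proof.
case: u => [[i [j|]]|]; case: v => [[i' [j'|]]|] //=; crush.
all: by case=> <-. Qed.

Lemma ballE u n : ball e u n = [set v | D u v <= n].
Proof.
elim: n => [|n IH].
  apply/setP => v; rewrite /ball /= !inE leqn0.
  apply/eqP/eqP => [->|/D0 ->]; [exact: Duu| by []].
rewrite /ball iterS -/(ball e u n) IH; apply/setP => v; rewrite !inE.
apply/idP/idP.
  case/orP => [/leqW //|/existsP [x /andP [] ]]; rewrite inE => hx hxv.
  exact: leq_trans (D_step u hxv) _.
rewrite leq_eqVlt ltnS; case/orP => [/eqP hv|->//].
apply/orP; right; apply/existsP; exists (pr u v).
have [h1 h2] := D_pred hv; by rewrite inE h2 leqnn h1.
Qed.

Lemma cardV : #|{: V}| = (k * k.+1).+1.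
Proof. by rewrite card_option card_prod card_ord card_option card_ord. Qed.

Lemma find_thr (P : pred nat) m N : m < N -> (forall n, P n = (m <= n)) ->
  find P (iota 0 N) = m.
Proof.
move=> hm hP; rewrite -(subnKC (ltnW hm)) iotaD find_cat.
have -> : has P (iota 0 m) = false.
  apply/hasP => -[x]; rewrite mem_iota add0n hP => /andP [_]; rewrite ltnNge => /negP; done.
rewrite size_iota add0n.
have : 0 < N - m by rewrite subn_gt0.
case: (N - m) => [|r] //= _; by rewrite hP leqnn addn0.
Qed.

Lemma distE (hk : 2 <= k) u v : dist e u v = D u v.
Proof.
rewrite /dist; apply: find_thr => [|n]; last by rewrite ballE inE.
rewrite cardV; apply: leq_ltn_trans (D_le4 u v) _.
nia.
Qed.

Lemma bigmin_le (I : eqType) (r : seq I) (P : pred I) (F : I -> nat) x w :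
  w \in r -> P w -> \big[minn/x]_(i <- r | P i) F i <= F w.
Proof.
elim: r => // a r IH; rewrite inE big_cons => /orP [/eqP <- ->|/IH h /h]; first exact: geq_minl.
case: ifP => // _ h'; exact: leq_trans (geq_minr _ _) h'.
Qed.

Lemma dsE (hk : 2 <= k) u (S : {set V}) n : n <= 4 ->
  (exists2 w, w \in S & D u w <= n) -> (forall w, w \in S -> n <= D u w) ->
  dist_set e u S = n.
Proof.
move=> n4 [w wS hw] hS; apply/eqP; rewrite eqn_leq; apply/andP; split.
  apply: leq_trans _ hw; rewrite -(distE hk).
  exact: (bigmin_le _ _ (mem_index_enum w) wS).
apply: (big_ind (fun x => n <= x)).
- rewrite cardV; apply: leq_trans n4 _; nia.
- by move=> x y hx hy; rewrite leq_min hx hy.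
- by move=> v /hS; rewrite (distE hk).
Qed.

Lemma ds_eq (hk : 2 <= k) u v (S : {set V}) :
  (forall w, w \in S -> D u w = D v w) -> dist_set e u S = dist_set e v S.
Proof.
move=> h; apply: eq_bigr => w /h; by rewrite !(distE hk).
Qed.

Definition o0 (hk : 2 <= k) : 'I_k := Ordinal (leq_trans (isT : 0 < 2) hk).
Definition o1 (hk : 2 <= k) : 'I_k := Ordinal hk.
Definition oth (hk : 2 <= k) (i : 'I_k) := if i == o0 hk then o1 hk else o0 hk.
Lemma oth_neq (hk : 2 <= k) i : (oth hk i == i) = false.
Proof.
rewrite /oth; case: ifP => [/eqP ->|h]; first by [].
by rewrite eq_sym h.
Qed.

Lemma eqSome (T : eqType) (a b : T) : (Some a == Some b) = (a == b).
Proof. by []. Qed.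
Lemma eqNS (T : eqType) (b : T) : (None == Some b) = false.
Proof. by []. Qed.
Lemma eqSN (T : eqType) (b : T) : (Some b == None) = false.
Proof. by []. Qed.
Ltac simp := rewrite ?eqSome ?xpair_eqE ?eqNS ?eqSN ?eqxx ?andbT ?andbF /=.

Lemma notwin u v w : (w \in nbhd e u :\ v) != (w \in nbhd e v :\ u) -> ~~ twins e u v.
Proof. by apply: contra => /eqP ->. Qed.

Definition tc (u : V) : {set V} := match u with
  | Some (i, Some _) => [set Some (i, Some j) | j : 'I_k]
  | _ => [set u] end.

Lemma twin_sub (hk : 2 <= k) u : twin_class e u \subset tc u.
Proof.
apply/subsetP => v; rewrite inE; apply: contraLR.
case: u => [[i [j|]]|]; case: v => [[i' [j'|]]|] //=.
- case: (i' =P i) => [->|hi] h.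
    by case/negP: h; apply: imset_f.
  apply: (@notwin _ _ (Some (i, None))); rewrite !inE /=; simp; crush.
- case: (i' =P i) => [->|hi] _.
    by apply: (@notwin _ _ None); rewrite !inE /=; simp.
  apply: (@notwin _ _ (Some (i, None))); rewrite !inE /=; simp; crush.
- move=> _; apply: (@notwin _ _ (Some (oth hk i, None))); rewrite !inE /=; simp.
  have := oth_neq hk i; crush.
- by move=> _; apply: (@notwin _ _ None); rewrite !inE /=; simp.
- rewrite inE => h; apply: (@notwin _ _ (Some (i, Some (o0 hk)))); rewrite !inE /=; simp.
  move: h; simp; crush.
- move=> _; apply: (@notwin _ _ (Some (oth hk i, None))); rewrite !inE /=; simp.
  have := oth_neq hk i; crush.
- move=> _; apply: (@notwin _ _ (Some (oth hk i', None))); rewrite !inE /=; simp.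
  have := oth_neq hk i'; crush.
- move=> _; apply: (@notwin _ _ (Some (oth hk i', None))); rewrite !inE /=; simp.
  have := oth_neq hk i'; crush.
- by rewrite inE eqxx.
Qed.

Lemma card_tc (hk : 2 <= k) u : #|tc u| <= k.
Proof.
case: u => [[i [j|]]|] /=; last 1 [idtac] || idtac.
- by apply: leq_trans (leq_imset_card _ _) _; rewrite card_ord.
- by rewrite cards1; apply: leq_trans hk.
- by rewrite cards1; apply: leq_trans hk.
Qed.

Lemma leaf_twins i j j' : twins e (Some (i, Some j)) (Some (i, Some j')).
Proof.
apply/eqP/setP => w; rewrite !inE; by case: w => [[a [b|]]|] //=; simp.
Qed.

Lemma twin_numberE (hk : 2 <= k) : twin_number e = k.
Proof.
apply/eqP; rewrite eqn_leq; apply/andP; split.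
  apply/bigmax_leqP => u _.
  exact: leq_trans (subset_leq_card (twin_sub hk u)) (card_tc hk u).
apply: leq_trans (leq_bigmax (Some (o0 hk, Some (o0 hk)))).
have hc : #|[set Some (o0 hk, Some j) | j : 'I_k]| = k.
  rewrite card_imset ?card_ord // => a b [] //.
rewrite -{1}hc; apply: subset_leq_card; apply/subsetP => v /imsetP [j _ ->].
by rewrite inE leaf_twins.
Qed.

Definition cb (v : V) : option 'I_k := match v with
  | None => None | Some (i, None) => Some i | Some (_, Some j) => Some j end.
Definition fib (o : option 'I_k) : {set V} := [set v | cb v == o].
Definition wit (o : option 'I_k) : V := match o with None => None | Some j => Some (j, None) end.
Lemma cb_wit o : cb (wit o) = o. Proof. by case: o. Qed.
Definition P0 : {set {set V}} := [set fib o | o : option 'I_k].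

Lemma fib_inj : injective fib.
Proof.
move=> o o' h; have : wit o \in fib o by rewrite inE cb_wit.
by rewrite h inE cb_wit => /eqP.
Qed.

Lemma card_P0 : #|P0| = k.+1.
Proof. by rewrite card_imset ?card_option ?card_ord //; exact: fib_inj. Qed.

Lemma part_P0 : partition P0 [set: V].
Proof.
apply/and3P; split.
- apply/eqP/setP => v; rewrite inE; apply/bigcupP; exists (fib (cb v)).
    exact: imset_f.
  by rewrite inE.
- apply/trivIsetP => A B /imsetP [o _ ->] /imsetP [o' _ ->] hne.
  rewrite -setI_eq0; apply/eqP/setP => v; rewrite !inE.
  apply/negP => /andP [/eqP h1 /eqP h2]; move: hne; by rewrite -h1 -h2 eqxx.
- apply/negP => /imsetP [o _ h].
  have : wit o \in fib o by rewrite inE cb_wit.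
  by rewrite -h inE.
Qed.

Definition R (u : V) (o : option 'I_k) : nat := match u, o with
  | None, None => 0
  | None, Some _ => 1
  | Some (_, None), None => 1
  | Some (i, None), Some m => if m == i then 0 else 1
  | Some (_, Some _), None => 2
  | Some (i, Some j), Some m => if m == j then 0 else if m == i then 1 else 2
  end.

Definition W (u : V) (o : option 'I_k) : V := match u, o with
  | _, None => None
  | None, Some m => Some (m, None)
  | Some (i, None), Some m => if m == i then u else Some (i, Some m)
  | Some (i, Some j), Some m => if m == j then u else if m == i then Some (i, None) else Some (i, Some m)
  end.

Lemma W_in u o : W u o \in fib o.
Proof.
rewrite inE; case: u => [[i [j|]]|]; case: o => [m|] //=; crush.
Qed.

Lemma W_D u o : D u (W u o) <= R u o.
Proof.
case: u => [[i [j|]]|]; case: o => [m|] //=; crush.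
Qed.

Lemma R_low u o w : w \in fib o -> R u o <= D u w.
Proof.
rewrite inE; case: u => [[i [j|]]|]; case: o => [m|] //=; case: w => [[a [b|]]|] //=; simp; crush.
Qed.

Lemma R_inj u v : (forall o, R u o = R v o) -> u = v.
Proof.
case: u => [[i [j|]]|]; case: v => [[i' [j'|]]|] => h;
  move: (h None) => /=; try done;
  try move: (h (Some i)); try move: (h (Some i')); try move: (h (Some j)); try move: (h (Some j'));
  rewrite /=; crush.
Qed.

Lemma dsR (hk : 2 <= k) u o : dist_set e u (fib o) = R u o.
Proof.
apply: dsE => //.
- case: u => [[i [j|]]|]; case: o => [m|] //=; crush.
- by exists (W u o); [exact: W_in | exact: W_D].
- by move=> w; apply: R_low.
Qed.

Lemma loc_P0 (hk : 2 <= k) : locating e P0.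
Proof.
apply/andP; split; first exact: part_P0.
apply/forallP => u; apply/forallP => v; apply/implyP => huv.
have [o ho] : exists o, R u o != R v o.
  apply/existsP; apply: contraR huv => /existsPn h; apply/eqP/R_inj => o.
  by move/negPn/eqP: (h o).
apply/existsP; exists (fib o); rewrite imset_f //= !dsR //.
Qed.

Lemma D_pos u w : w != u -> 0 < D u w.
Proof. rewrite lt0n; apply: contra => /eqP/D0 ->; by []. Qed.

Lemma Dleaf_eq i j j' w : w != Some (i, Some j) -> w != Some (i, Some j') ->
  D (Some (i, Some j)) w = D (Some (i, Some j')) w.
Proof. case: w => [[a [b|]]|] //=; simp; crush. Qed.

Lemma Dleaf2 i j w : w != Some (i, Some j) -> w != Some (i, None) ->
  2 <= D (Some (i, Some j)) w.
Proof. case: w => [[a [b|]]|] //=; simp; crush. Qed.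

Lemma lower (hk : 2 <= k) (P : {set {set V}}) : locating e P -> k.+1 <= #|P|.
Proof.
case/andP => hpart hloc; case/and3P: hpart => /eqP hcov htriv _.
rewrite ltnNge; apply/negP => hle.
have blkP v : pblock P v \in P by apply: pblock_mem; rewrite hcov inE.
have blkv v : v \in pblock P v by rewrite mem_pblock hcov inE.
have blk_eq S v : S \in P -> v \in S -> pblock P v = S.
  by move=> hS hv; apply: def_pblock.
have notin u S w : S \in P -> S != pblock P u -> w \in S -> w \notin pblock P u.
  move=> SP hne wS; apply/negP => wB.
  by move: hne; rewrite -(blk_eq _ _ SP wS) (blk_eq _ _ (blkP u) wB) eqxx.
have ds0 u : dist_set e u (pblock P u) = 0.
  apply: dsE => //; first by exists u; rewrite ?Duu.
have key u v : u != v -> pblock P u = pblock P v ->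
    (forall S, S \in P -> S != pblock P u -> dist_set e u S = dist_set e v S) -> False.
  move=> huv hb hS; move: hloc => /forallP/(_ u)/forallP/(_ v); rewrite huv /=.
  case/existsP => S /andP [SP]; case: (S =P pblock P u) => [->|/eqP hne].
    by rewrite {2}hb !ds0 eqxx.
  by rewrite hS // eqxx.
have surj (f : 'I_k -> {set V}) : injective f -> (forall j, f j \in P) ->
    forall S, S \in P -> exists j, S = f j.
  move=> finj fP S SP.
  have sub : [set f j | j : 'I_k] \subset P.
    by apply/subsetP => x /imsetP [j _ ->].
  have : [set f j | j : 'I_k] == P.
    by rewrite eqEcard sub card_imset // card_ord.
  move/eqP => hE; move: SP; rewrite -hE => /imsetP [j _ ->]; by exists j.
have leafin i S : S \in P -> exists j, Some (i, Some j) \in S.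
  move=> SP.
  have finj : injective (fun j => pblock P (Some (i, Some j))).
    move=> j j' h; apply/eqP/negPn/negP => hne.
    apply: (key _ _ _ h); first by simp.
    move=> S' S'P hne'; apply: ds_eq => // w wS.
    have := notin _ _ _ S'P hne' wS => wB.
    apply: Dleaf_eq; apply: contraNneq wB => ->; first [exact: blkv | rewrite h; exact: blkv].
  have [j ->] := surj _ finj (fun j => blkP _) S SP.
  by exists j.
have binj : injective (fun i => pblock P (Some (i, None))).
  move=> i i' h; apply/eqP/negPn/negP => hne.
  set B := pblock P (Some (i, None)).
  have [j hj] := leafin i B (blkP _).
  have [j' hj'] := leafin i' B (blkP _).
  have hj'' : Some (i', None) \in B by rewrite /B h.
  have e1 := blk_eq _ _ (blkP (Some (i, None))) hj.
  have e2 := blk_eq _ _ (blkP (Some (i, None))) hj'.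
  apply: (key (Some (i, Some j)) (Some (i', Some j'))); first by simp; rewrite (negPf hne).
    by rewrite e1 e2.
  move=> S SP hne'.
  have ds2 a b : Some (a, Some b) \in B -> Some (a, None) \in B ->
      dist_set e (Some (a, Some b)) S = 2.
    move=> hab ha; have eb := blk_eq _ _ (blkP (Some (i, None))) hab.
    apply: dsE => //.
      have [m hm] := leafin a S SP; exists (Some (a, Some m)) => //=; simp; crush.
    move=> w wS; have := notin _ _ _ SP hne' wS; rewrite e1 => wB.
    by apply: Dleaf2; apply: contraNneq wB => ->.
  by rewrite !ds2 // ?blkv.
have [i hi] := surj _ binj (fun i => blkP _) _ (blkP None).
apply: (key None (Some (i, None))) => //; rewrite -?hi //.
move=> S SP hne'.
have wr w : w \in S -> w \notin pblock P None := notin _ _ _ SP hne'.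
have -> : dist_set e None S = 1.
  apply: dsE => //.
    have [m hm] := surj _ binj (fun i => blkP _) S SP.
    by exists (Some (m, None)); rewrite ?hm.
  move=> w /wr wB; apply: D_pos; apply: contraNneq wB => ->; exact: blkv.
apply/esym; apply: dsE => //.
  have [m hm] := leafin i S SP; exists (Some (i, Some m)) => //=; simp.
  by [].
move=> w /wr wB; apply: D_pos; apply: contraNneq wB => ->; by rewrite hi.
Qed.

Lemma pdimE (hk : 2 <= k) : partition_dim e = k.+1.
Proof.
apply/eqP; rewrite eqn_leq; apply/andP; split.
  rewrite -card_P0; apply: (bigmin_le _ _ (mem_index_enum P0)); exact: loc_P0.
apply: (big_ind (fun x => k.+1 <= x)).
- by rewrite -card_P0; apply: max_card.
- by move=> x y hx hy; rewrite leq_min hx hy.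
- by move=> P; apply: lower.
Qed.

End S.

Theorem proposition6 (k : nat) (hk : 2 <= k) :
  twin_number (@tk2_adj k) = k /\ partition_dim (@tk2_adj k) = k.+1.
Proof. split; [exact: twin_numberE | exact: pdimE]. Qed.
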